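(* Let $1\le t\le n$. Let $M_t$ be the real matrix with rows and columns indexed by the nonempty subsets of $[n]$ of size at most $t$, ordered by nondecreasing size, with entries $M_t[a,b]=2^{|a\cap b|}$; for $1\le r<t$, $M_r$ is the upper-left principal submatrix of $M_t$ indexed by the sets of size at most $r$. For $t\ge2$, the Schur complement $M_t/M_{t-1}$ of $M_{t-1}$ in $M_t$ is well defined (i.e. $M_{t-1}$ is invertible) and $$M_t/M_{t-1}=I+\frac{\mathbf 1_t\mathbf 1_t^T}{\alpha_{t-1}},$$ where $\mathbf 1_t$ is the all-ones vector of length $\binom nt$ and $\alpha_k=\sum_{j=0}^k\binom nj$. For $t=1$, with the convention $M_1/M_0:=M_1$, the same formula holds, i.e. $M_1=I+\mathbf 1_1\mathbf 1_1^T$.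
   Context: For a block matrix $\begin{pmatrix}A&B\\ C&D'\end{pmatrix}$ with $A$ invertible, the Schur complement of $A$ is $D'-CA^{-1}B$. Here $M_t/M_{t-1}$ is indexed by the subsets of $[n]$ of size exactly $t$. *)

(* Defs.v *)
From HB Require Import structures.
From mathcomp Require Import all_boot all_order all_algebra.
Set Implicit Arguments. Unset Strict Implicit. Unset Printing Implicit Defensive.
Import Order.TTheory GRing.Theory Num.Theory.
Local Open Scope ring_scope.

Definition low_sets (n t : nat) : {set {set 'I_n}} :=
  [set a : {set 'I_n} | (0 < #|a|)%N && (#|a| <= t)%N].

Definition level_sets (n t : nat) : {set {set 'I_n}} :=
  [set a : {set 'I_n} | #|a| == t].

Definition Mblock (R : nzRingType) (n : nat) (P Q : {set {set 'I_n}})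
  : 'M[R]_(#|P|, #|Q|) :=
  \matrix_(i < #|P|, j < #|Q|)
     ((2 ^ #|(enum_val i) :&: (enum_val j)|)%N)%:R.

Definition Mt (R : nzRingType) (n t : nat) :=
  Mblock R (low_sets n t) (low_sets n t).

Definition schur (R : comUnitRingType) (p q : nat) (A : 'M[R]_p)
  (B : 'M[R]_(p, q)) (C : 'M[R]_(q, p)) (D : 'M[R]_q) : 'M[R]_q :=
  D - C *m invmx A *m B.

Definition alpha (n k : nat) : nat := (\sum_(j < k.+1) 'C(n, j))%N.

(* Main.v *)
Require Import Defs.
From HB Require Import structures.
From mathcomp Require Import all_boot all_order all_algebra.
From mathcomp Require Import ring lra.
Set Implicit Arguments. Unset Strict Implicit. Unset Printing Implicit Defensive.
Import Order.TTheory GRing.Theory Num.Theory.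
Local Open Scope ring_scope.

Lemma prod_mask (R : comNzRingType) (T : finType) (a c d : {set T}) :
  \prod_(i : T) (if i \in d then (if i \in a then -1 else 0)
                 else (if i \in c then 0 else 1) : R)
  = ((c \subset d) && (d \subset a))%:R * (-1)^+#|d|.
Proof.
case: (boolP ((c \subset d) && (d \subset a))) => [/andP[cd da]|H].
  rewrite mul1r (bigID (mem d)) /= -prodr_const -[RHS]mulr1; congr (_ * _).
    by apply: eq_bigr => i id; rewrite id (subsetP da).
  rewrite big1 // => i nd; rewrite (negPf nd); case: ifP => // ic.
  by rewrite (subsetP cd _ ic) in nd.
rewrite mul0r.
have [i Hi]: exists i, (i \in d) && (i \notin a) || (i \in c) && (i \notin d).
  move: H; rewrite negb_and => /orP[/subsetPn[i ic nd]|/subsetPn[i id na]];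
  by exists i; rewrite ?ic ?nd ?id ?na ?orbT.
rewrite (bigD1 i) //=; case/orP: Hi => /andP[-> /negPf->]; first by rewrite mul0r.
by rewrite mul0r.
Qed.

Lemma moebius (R : comNzRingType) (T : finType) (a c : {set T}) : c \subset a ->
  \sum_(d : {set T} | (c \subset d) && (d \subset a)) (-1)^+#|d|
  = ((a == c)%:R * (-1)^+#|c| : R).
Proof.
move=> ca.
set G := fun (i : T) (b : bool) => (if b then (if i \in a then -1 else 0)
                 else (if i \in c then 0 else 1) : R).
have H2 : \sum_(d : {set T}) \prod_i G i (i \in d) = \prod_i \sum_(b : bool) G i b.
  rewrite bigA_distr_bigA /=.
  rewrite (reindex (fun f : {ffun T -> bool} => [set x | f x])) /=.
    by apply: eq_bigr => f _; apply: eq_bigr => i _; rewrite inE.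
  exists (fun d : {set T} => [ffun x => x \in d]) => f _.
    by apply/ffunP => x; rewrite ffunE inE.
  by apply/setP => x; rewrite inE ffunE.
rewrite big_mkcond /= -[LHS]/(\sum_(d : {set T}) _) (_ : \sum_d _ = \sum_(d : {set T}) \prod_i G i (i \in d)); last first.
  by apply: eq_bigr => d _; rewrite /G prod_mask; case: ifP => _; rewrite ?mul1r ?mul0r.
rewrite H2 /G.
under eq_bigr do rewrite big_bool /=.
case: (eqVneq a c) => [->|ac].
  rewrite mul1r -prodr_const (bigID (mem c)) /= [X in _ * X]big1 ?mulr1.
    by apply: eq_bigr => i ->; rewrite addr0.
  by move=> i /negPf-> /=; rewrite add0r.
rewrite (_ : false%:R = 0) // mul0r.
have [i ia nc] : exists2 i, i \in a & i \notin c.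
  apply/subsetPn; apply: contra ac => ac'; by rewrite eqEsubset ac' ca.
by rewrite (bigD1 i) //= ia (negPf nc) addNr mul0r.
Qed.
Lemma pow2_split (R : nzRingType) n k (S : {set 'I_n}) :
  ((2 ^ #|S|)%N%:R : R) = 1 + \sum_(c in low_sets n k) (c \subset S)%:R
      + \sum_(c : {set 'I_n} | c \subset S) (k < #|c|)%N%:R.
Proof.
rewrite -card_powerset -sumr_const.
under eq_bigl => c do rewrite powersetE.
have -> : \sum_(c : {set 'I_n} | c \subset S) (1:R) = \sum_(c : {set 'I_n} | c \subset S) ((c == set0)%:R + (c \in low_sets n k)%:R + (k < #|c|)%N%:R).
  apply: eq_bigr => c _; rewrite -!natrD (_ : (_ + _ + _)%N = 1%N) //.
  rewrite inE -cards_eq0; case: #|c| => [|m] //=.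
  by rewrite ltnS add0n; case: ltnP.
rewrite !big_split /=; congr (_ + _ + _).
  rewrite (bigD1 set0) ?sub0set //= eqxx big1 ?addr0 // => c /andP[_ /negPf->] //.
rewrite [RHS]big_mkcond [LHS]big_mkcond; apply: eq_bigr => c _.
by case: (c \subset S); case: (c \in low_sets n k).
Qed.

Lemma high_small (R : nzRingType) n k (S : {set 'I_n}) : (#|S| <= k)%N ->
  \sum_(c : {set 'I_n} | c \subset S) (k < #|c|)%N%:R = 0 :> R.
Proof.
move=> H; apply: big1 => c cS.
by rewrite ltnNge (leq_trans (subset_leq_card cS) H).
Qed.

Lemma high_eq (R : nzRingType) n k (a b : {set 'I_n}) : #|a| = k.+1 -> #|b| = k.+1 ->
  \sum_(c : {set 'I_n} | c \subset a :&: b) (k < #|c|)%N%:R = (a == b)%:R :> R.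
Proof.
move=> Ha Hb; case: (eqVneq a b) => [<-|ab].
  rewrite setIid (bigD1 a) //= Ha ltnSn big1 ?addr0 // => c /andP[ca cna].
  have : (#|c| < #|a|)%N by apply: proper_card; rewrite properEneq cna ca.
  by rewrite Ha ltnS leqNgt => /negPf->.
apply: high_small.
rewrite -ltnS -Ha; apply: proper_card; rewrite properEneq subsetIl andbT.
apply: contra ab => /eqP/setIidPl ab'.
by rewrite eqEcard ab' Ha Hb leqnn.
Qed.

Lemma alpha_card n k : (#|low_sets n k| + 1)%N = alpha n k.
Proof.
rewrite /alpha.
rewrite (eq_bigr (fun j : 'I_k.+1 => \sum_(A : {set 'I_n}) (#|A| == j : nat))%N); last first.
  move=> j _; rewrite -{1}(card_ord n) -card_draws -sum1_card big_mkcond.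
  by apply: eq_bigr => A _; rewrite inE; case: (_ == _).
rewrite exchange_big /=.
rewrite (eq_bigr (fun A : {set 'I_n} => (#|A| <= k : nat))%N); last first.
  move=> A _; case: (ltnP #|A| k.+1) => h.
    rewrite (bigD1 (Ordinal h)) //= eqxx big1 ?addn0; last first.
      move=> j ne; case: eqP => // e; case/eqP: ne; apply: val_inj; by rewrite /= e.
    by rewrite ltnS in h; rewrite h.
  rewrite big1; last by move=> j _; case: eqP => // e; move: (ltn_ord j); rewrite -e ltnNge h.
  by rewrite leqNgt h.
rewrite (bigD1 set0) //= cards0 addnC; congr (_ + _)%N.
rewrite -sum1_card [RHS]big_mkcond [LHS]big_mkcond; apply: eq_bigr => A _.
by rewrite inE lt0n cards_eq0; case: (A == set0); case: (_ <= _)%N.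
Qed.
Lemma schur_alg (R : fieldType) p q (Y Yi : 'M[R]_p) (W : 'M[R]_(p,q))
  (v1 u1 : 'cV[R]_p) (u2 : 'cV[R]_q) (pp kk : R) (A : 'M_p) B C D :
  Y *m Yi = 1%:M -> Y *m v1 = u1 -> v1^T *m v1 = pp%:M -> v1^T *m W = kk *: u2^T ->
  kk * (2 - kk) = 0 -> 1 + pp != 0 ->
  A = u1 *m u1^T + Y *m Y^T -> B = u1 *m u2^T + Y *m W ->
  C = u2 *m u1^T + W^T *m Y^T -> D = u2 *m u2^T + W^T *m W + 1%:M ->
  A \in unitmx /\ D - C *m invmx A *m B = 1%:M + (1 + pp)^-1 *: (u2 *m u2^T).
Proof.
move=> YYi Yv vv vW kk0 pp0 hA hB hC hD.
set a := (1 + pp)^-1.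
have haa : a * (1 + pp) = 1 by rewrite mulVf.
have ha : 1 - a * pp = a by rewrite -{1}haa; ring.
set G := 1%:M + v1 *m v1^T.
set Gi := 1%:M - a *: (v1 *m v1^T).
have Gv : Gi *m v1 = a *: v1.
  rewrite mulmxBl mul1mx -scalemxAl -mulmxA vv mul_mx_scalar scalerA.
  by rewrite -{1}[v1]scale1r -scalerBl ha.
have vG : v1^T *m Gi = a *: v1^T.
  rewrite mulmxBr mulmx1 -scalemxAr mulmxA vv mul_scalar_mx scalerA.
  by rewrite -{1}[v1^T]scale1r -scalerBl ha.
have GGi : G *m Gi = 1%:M.
  rewrite mulmxDl mul1mx -mulmxA vG -scalemxAr /Gi.
  by rewrite addrAC -addrA subrr addr0.
have YiY : Yi *m Y = 1%:M by apply: mulmx1C.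
have hA' : A = Y *m G *m Y^T.
  by rewrite hA -Yv trmx_mul !mulmxA /G mulmxDr mulmx1 mulmxDl addrC !mulmxA.
set X := Yi^T *m Gi *m Yi.
have YtYit : Y^T *m Yi^T = 1%:M by rewrite -trmx_mul YiY trmx1.
have AX : A *m X = 1%:M.
  rewrite hA' /X !mulmxA -[Y *m G *m Y^T *m Yi^T]mulmxA YtYit mulmx1.
  by rewrite -[Y *m G *m Gi]mulmxA GGi mulmx1 YYi.
have [Au _] := mulmx1_unit AX.
have iA : invmx A = X.
  by rewrite -[invmx A]mulmx1 -AX mulmxA mulVmx // mul1mx.
split => //.
have hB' : B = Y *m (v1 *m u2^T + W) by rewrite hB mulmxDr mulmxA Yv.
have hC' : C = (u2 *m v1^T + W^T) *m Y^T.
  by rewrite hC -Yv trmx_mul mulmxDl mulmxA.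
have Wv : W^T *m v1 = kk *: u2.
  by rewrite -[v1]trmxK -trmx_mul vW linearZ /= trmxK.
have S1 : (u2 *m v1^T + W^T) *m Gi = W^T + (a - a * kk) *: (u2 *m v1^T).
  rewrite mulmxDl -mulmxA vG -scalemxAr /Gi mulmxBr mulmx1 -scalemxAr mulmxA Wv.
  rewrite -scalemxAl scalerA scalerBl addrCA addrA; congr (_ + _); ring.
have CXB : C *m invmx A *m B
    = W^T *m W + (kk + (a - a * kk) * (pp + kk)) *: (u2 *m u2^T).
  rewrite iA /X hB' hC' !mulmxA -[_ *m Y^T *m Yi^T]mulmxA YtYit mulmx1.
  rewrite -[_ *m Gi *m Yi *m Y]mulmxA YiY mulmx1 S1.
  rewrite mulmxDl -!scalemxAl !mulmxDr !mulmxA Wv.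
  rewrite -[u2 *m v1^T *m v1]mulmxA vv mul_mx_scalar -[u2 *m v1^T *m W]mulmxA vW.
  rewrite -!scalemxAl -scalemxAr.
  set J := u2 *m u2^T; set WW := W^T *m W.
  apply/matrixP => i j; rewrite !mxE; ring.
have hc : kk + (a - a * kk) * (pp + kk) = 1 - a.
  rewrite (_ : kk + (a - a * kk) * (pp + kk) = kk * (1 - a * (1 + pp)) + a * pp + a * (kk * (2 - kk))); last by ring.
  rewrite kk0 haa subrr !mulr0 add0r addr0 -haa; ring.
rewrite CXB hD hc.
set J := u2 *m u2^T; set WW := W^T *m W.
apply/matrixP => i j; rewrite !mxE; ring.
Qed.
Section Concrete.
Variables (R : realFieldType) (n k : nat).
Local Notation P := (low_sets n k).
Local Notation Q := (level_sets n k.+1).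

Lemma sum_enum (A : {set {set 'I_n}}) (F : {set 'I_n} -> R) :
  \sum_(l < #|A|) F (enum_val l) = \sum_(d in A) F d.
Proof. by rewrite (big_enum_val F). Qed.

Lemma sum_cond (A : {set {set 'I_n}}) (B : pred {set 'I_n}) (f g : {set 'I_n} -> R) :
  (forall d, (if d \in A then f d else 0) = (if B d then g d else 0)) ->
  \sum_(d in A) f d = \sum_(d | B d) g d.
Proof. by move=> H; rewrite big_mkcond [RHS]big_mkcond; apply: eq_bigr => d _. Qed.

Lemma inP_card (a : {set 'I_n}) : a \in P -> (0 < #|a|)%N /\ (#|a| <= k)%N.
Proof. by rewrite inE => /andP. Qed.

Lemma sum_split (F : {set 'I_n} -> R) (S : {set 'I_n}) :
  \sum_(d : {set 'I_n} | d \subset S) F d = F set0 + \sum_(d in P) (d \subset S)%:R * F d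
      + \sum_(d : {set 'I_n} | d \subset S) (k < #|d|)%N%:R * F d.
Proof.
have -> : \sum_(d : {set 'I_n} | d \subset S) F d = \sum_(d : {set 'I_n} | d \subset S)
   ((d == set0)%:R * F d + (d \in P)%:R * F d + (k < #|d|)%N%:R * F d).
  apply: eq_bigr => c _; rewrite -!mulrDl -!natrD (_ : (_ + _ + _)%N = 1%N) ?mul1r //.
  rewrite inE -cards_eq0; case: #|c| => [|m] //=.
  by rewrite ltnS add0n; case: ltnP.
rewrite !big_split /=; congr (_ + _ + _).
  rewrite (bigD1 set0) ?sub0set //= eqxx mul1r big1 ?addr0 // => c /andP[_ /negPf->].
  by rewrite mul0r.
rewrite [RHS]big_mkcond [LHS]big_mkcond; apply: eq_bigr => c _.
by case: (c \subset S); case: (c \in P); rewrite ?mul0r ?mul1r.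
Qed.

Lemma pow2_entry (a b : {set 'I_n}) :
  ((2 ^ #|a :&: b|)%N%:R : R) = 1 + \sum_(l < #|P|)
     ((enum_val l \subset a)%:R * (enum_val l \subset b)%:R)
   + \sum_(c : {set 'I_n} | c \subset a :&: b) (k < #|c|)%N%:R.
Proof.
rewrite (pow2_split _ k) (sum_enum _ (fun d => (d \subset a)%:R * (d \subset b)%:R)).
congr (_ + _ + _); apply: eq_bigr => d _; rewrite subsetI.
by case: (d \subset a); case: (d \subset b); rewrite ?mul1r ?mul0r.
Qed.

Definition Ym : 'M[R]_#|P| := \matrix_(i < #|P|, j < #|P|) ((enum_val j \subset enum_val i)%:R).
Definition Yim : 'M[R]_#|P| := \matrix_(i < #|P|, j < #|P|)
  ((-1)^+(#|enum_val i| + #|enum_val j|) * (enum_val j \subset enum_val i)%:R).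
Definition Wm : 'M[R]_(#|P|, #|Q|) := \matrix_(i < #|P|, j < #|Q|) ((enum_val i \subset enum_val j)%:R).
Definition v1 : 'cV[R]_#|P| := \col_(i < #|P|) (- (-1)^+#|enum_val i|).

Lemma YYi : Ym *m Yim = 1%:M.
Proof.
apply/matrixP => i j; rewrite !mxE.
rewrite (eq_bigr (fun l : 'I_#|P| => (enum_val l \subset enum_val i)%:R *
   ((-1)^+(#|enum_val l| + #|enum_val j|) * (enum_val j \subset enum_val l)%:R))); last first.
  by move=> l _; rewrite !mxE.
rewrite (sum_enum _ (fun d => (d \subset enum_val i)%:R *
   ((-1)^+(#|d| + #|enum_val j|) * (enum_val j \subset d)%:R))).
rewrite -(inj_eq enum_val_inj).
set a := enum_val i; set c := enum_val j.
have [c0 ck] := inP_card (enum_valP j); have [a0 ak] := inP_card (enum_valP i).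
rewrite -/c -/a in c0 ck a0 ak.
rewrite (@sum_cond _ (fun d => (c \subset d) && (d \subset a)) _ (fun d => (-1)^+#|c| * (-1)^+#|d|)); last first.
  move=> d; case: (boolP (c \subset d)) => cd; case: (boolP (d \subset a)) => da /=;
    rewrite ?mul0r ?mulr0 ?mulr1 ?mul1r ?if_same //.
  rewrite (_ : d \in P) ?mul1r ?exprD 1?mulrC //.
  rewrite inE (leq_trans c0 (subset_leq_card cd)) /=.
  exact: leq_trans (subset_leq_card da) ak.
case: (boolP (c \subset a)) => ca.
  rewrite -big_distrr /= moebius // mulrCA -expr2 sqrr_sign mulr1.
  by rewrite eq_sym.
rewrite big_pred0; last by move=> d; apply: contraNF ca => /andP[]; apply: subset_trans.
by case: eqP => // e; rewrite e subxx in ca.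
Qed.


Lemma moeb0 (a : {set 'I_n}) :
  \sum_(d : {set 'I_n} | d \subset a) (-1)^+#|d| = (a == set0)%:R :> R.
Proof.
have := @moebius R _ a set0 (sub0set a); rewrite cards0 expr0 mulr1 => <-.
by apply: eq_bigl => d; rewrite sub0set.
Qed.

Lemma sumX (S : {set 'I_n}) : S != set0 ->
  \sum_(d in P) (d \subset S)%:R * (-1)^+#|d| =
  - 1 - \sum_(d : {set 'I_n} | d \subset S) (k < #|d|)%N%:R * (-1)^+#|d| :> R.
Proof.
move=> S0; have := sum_split (fun d => (-1)^+#|d|) S.
rewrite moeb0 (negPf S0) cards0 expr0 (_ : false%:R = 0 :> R) // => H; lra.
Qed.

Definition u1 : 'cV[R]_#|P| := const_mx 1.
Definition u2 : 'cV[R]_#|Q| := const_mx 1.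

Lemma Yv : Ym *m v1 = u1.
Proof.
apply/matrixP => i j; rewrite !mxE.
rewrite (eq_bigr (fun l : 'I_#|P| => (enum_val l \subset enum_val i)%:R * - (-1)^+#|enum_val l|)); last first.
  by move=> l _; rewrite !mxE.
rewrite (sum_enum _ (fun d => (d \subset enum_val i)%:R * - (-1)^+#|d|)).
have [a0 ak] := inP_card (enum_valP i).
under eq_bigr do rewrite mulrN.
rewrite sumrN sumX; last by rewrite -cards_eq0 -lt0n.
rewrite big1 ?subr0 ?opprK // => d di.
by rewrite ltnNge (leq_trans (subset_leq_card di) ak) mul0r.
Qed.

Lemma vv : v1^T *m v1 = (#|P|%:R)%:M.
Proof.
apply/matrixP => i j; rewrite !ord1 !mxE /=.
rewrite (eq_bigr (fun _ => 1)); first by rewrite sumr_const card_ord.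
by move=> l _; rewrite !mxE mulrNN -expr2 sqrr_sign.
Qed.

Lemma vW : v1^T *m Wm = (1 + (-1)^+k.+1) *: u2^T.
Proof.
apply/matrixP => i j; rewrite !mxE.
rewrite (eq_bigr (fun l : 'I_#|P| => (enum_val l \subset enum_val j)%:R * - (-1)^+#|enum_val l|)); last first.
  by move=> l _; rewrite !mxE mulrC.
rewrite (sum_enum _ (fun d => (d \subset enum_val j)%:R * - (-1)^+#|d|)).
have bk : #|enum_val j| = k.+1 by move: (enum_valP j); rewrite inE => /eqP.
under eq_bigr do rewrite mulrN.
rewrite sumrN sumX; last by rewrite -cards_eq0 bk.
rewrite (bigD1 (enum_val j)) //= bk ltnSn mul1r big1 ?addr0 ?mulr1; first ring.
move=> d /andP[dj dn].
have : (#|d| < #|enum_val j|)%N by apply: proper_card; rewrite properEneq dn dj.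
by rewrite bk ltnS leqNgt => /negPf->; rewrite mul0r.
Qed.

Lemma entry_u (p q : nat) (i : 'I_p) (j : 'I_q) :
  ((const_mx 1 : 'cV[R]_p) *m (const_mx 1 : 'cV[R]_q)^T) i j = 1.
Proof. by rewrite !mxE big_ord1 !mxE mulr1. Qed.

Lemma E1 : Mt R n k = u1 *m u1^T + Ym *m Ym^T.
Proof.
apply/matrixP => i j; rewrite /Mt /Mblock [LHS]mxE [RHS]mxE entry_u ?[in RHS]mxE (pow2_entry (enum_val i) (enum_val j)).
have [a0 ak] := inP_card (enum_valP i).
rewrite high_small ?addr0; last by apply: leq_trans (subset_leq_card (subsetIl _ _)) ak.
by congr (_ + _); apply: eq_bigr => l _; rewrite !mxE.
Qed.

Lemma E2 : Mblock R P Q = u1 *m u2^T + Ym *m Wm.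
Proof.
apply/matrixP => i j; rewrite /Mt /Mblock [LHS]mxE [RHS]mxE entry_u ?[in RHS]mxE (pow2_entry (enum_val i) (enum_val j)).
have [a0 ak] := inP_card (enum_valP i).
rewrite high_small ?addr0; last by apply: leq_trans (subset_leq_card (subsetIl _ _)) ak.
by congr (_ + _); apply: eq_bigr => l _; rewrite !mxE.
Qed.

Lemma E3 : Mblock R Q P = u2 *m u1^T + Wm^T *m Ym^T.
Proof.
apply/matrixP => i j; rewrite /Mt /Mblock [LHS]mxE [RHS]mxE entry_u ?[in RHS]mxE (pow2_entry (enum_val i) (enum_val j)).
have [a0 ak] := inP_card (enum_valP j).
rewrite high_small ?addr0; last by apply: leq_trans (subset_leq_card (subsetIr _ _)) ak.
by congr (_ + _); apply: eq_bigr => l _; rewrite !mxE.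
Qed.

Lemma E4 : Mblock R Q Q = u2 *m u2^T + Wm^T *m Wm + 1%:M.
Proof.
apply/matrixP => i j; rewrite /Mblock [LHS]mxE [RHS]mxE [X in X + _]mxE entry_u [X in _ + X + _]mxE [X in _ + X]mxE (pow2_entry (enum_val i) (enum_val j)).
have ak : #|enum_val i| = k.+1 by move: (enum_valP i); rewrite inE => /eqP.
have bk : #|enum_val j| = k.+1 by move: (enum_valP j); rewrite inE => /eqP.
rewrite high_eq // (inj_eq enum_val_inj).
by congr (_ + _ + _); apply: eq_bigr => l _; rewrite !mxE.
Qed.

End Concrete.

Unset Implicit Arguments.
Theorem lemma7 (R : realFieldType) (n t : nat) :
  (1 <= t)%N -> (t <= n)%N ->
  ((2 <= t)%N ->
     Mt R n t.-1 \in unitmx /\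
     schur (Mt R n t.-1)
           (Mblock R (low_sets n t.-1) (level_sets n t))
           (Mblock R (level_sets n t) (low_sets n t.-1))
           (Mblock R (level_sets n t) (level_sets n t))
     = 1%:M + ((alpha n t.-1)%:R)^-1 *: const_mx 1) /\
  (t = 1%N -> Mt R n 1 = 1%:M + const_mx 1).
Proof.
move=> t1 tn; split.
  case: t t1 tn => [|[|k]] // _ _ _ /=.
  have kk0 : (1 + (-1)^+k.+2) * (2 - (1 + (-1)^+k.+2)) = 0 :> R.
    rewrite (_ : (1 + (-1)^+k.+2) * (2 - (1 + (-1)^+k.+2)) = 1 - ((-1)^+k.+2)^+2); last by ring.
    by rewrite sqrr_sign subrr.
  have pp0 : 1 + #|low_sets n k.+1|%:R != 0 :> R.
    rewrite gt_eqF //; have := ler0n R #|low_sets n k.+1|; lra.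
  rewrite /schur.
  have [Au ->] := schur_alg (YYi R n k.+1) (Yv R n k.+1) (vv R n k.+1) (vW R n k.+1)
      kk0 pp0 (E1 R n k.+1) (E2 R n k.+1) (E3 R n k.+1) (E4 R n k.+1).
  split => //; congr (_ + _ *: _).
    by rewrite -alpha_card natrD addrC.
  by apply/matrixP => i j; rewrite entry_u mxE.
move=> _.
apply/matrixP => i j; rewrite /Mt /Mblock [LHS]mxE [RHS]mxE [X in _ + X]mxE.
rewrite (pow2_entry R 0 (enum_val i) (enum_val j)).
have ak : #|enum_val i| = 1%N.
  by move: (enum_valP i); rewrite inE => /andP[h1 h2]; apply/eqP; rewrite eqn_leq h1 h2.
have bk : #|enum_val j| = 1%N.
  by move: (enum_valP j); rewrite inE => /andP[h1 h2]; apply/eqP; rewrite eqn_leq h1 h2.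
rewrite (@high_eq R n 0) //.
rewrite big1; last first.
  move=> l _; have := enum_valP l; rewrite inE => /andP[h1 h2].
  by move: h1; rewrite lt0n -leqn0 h2.
rewrite addr0 [1%:M i j]mxE (inj_eq enum_val_inj) addrC.
done.
Qed.
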